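(* Let $G$ be a weak directed $st$-graph. Then in every complete chain of minimal vertex separators $T_0,T_1,\ldots,T_n$ of $G$ there exists some $T_i$ that contains a critical node.
   Context: A directed $st$-graph $G=(V,E,s,t)$ is a finite directed graph with no self-loops and no parallel edges, with distinct source $s$ (no incoming edges) and sink $t$ (no outgoing edges), such that every vertex lies on some directed walk from $s$ to $t$. Channels: a charge function $\eta:V\to\mathbb{N}\cup\{\infty\}$ with $\eta(s)=\eta(t)=\infty$; a flow for $\eta$ is a finitely supported $\phi$ from the set of $s$–$t$ walks to $\mathbb{N}$ with $\sum_p m_v(p)\phi(p)\le\eta(v)$ for every $v$ ($m_v(p)$ = number of occurrences of $v$ in $p$); value $\sum_p\phi(p)$; $\max_\eta$ = maximum value; $\phi$ inhibits $\eta$ if after subtracting $\phi$'s consumption from $\eta$ no positive-value flow exists; $\min_\eta$ = minimum value of an inhibiting flow; $G$ is weak if $\min_\eta\ne\max_\eta$ for some $\eta$. A vertex separator is a set $T\subseteq V$ meeting every $s$–$t$ walk; an mvs is an inclusion-minimal one. For $u\in V$, $A\subseteq V$: $u\sqsubseteq A$ if every directed walk from $u$ to $t$ contains a vertex of $A$; for $A,A'\subseteq V$, $A\sqsubseteq A'$ if $u\sqsubseteq A'$ for all $u\in A$, and $A\sqsubset A'$ means $A\sqsubseteq A'$ and $A\ne A'$. A sequence of mvs's $T_0,\ldots,T_n$ is a complete chain if $T_0=\{s\}$, $T_n=\{t\}$, $T_i\sqsubset T_{i+1}$ for all $i$, and for every mvs $T$ and every $i$, $T_i\sqsubseteq T\sqsubseteq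 T_{i+1}$ implies $T=T_i$ or $T=T_{i+1}$. A vertex $b$ is a critical node if there exist an mvs $T$ and $a\in T$ with $b\in T$ and a directed walk of length at least one from $a$ to $b$ ($a=b$ allowed). *)

(* Defs.v *)
From mathcomp Require Import all_boot finset.
Set Implicit Arguments. Unset Strict Implicit. Unset Printing Implicit Defensive.

Section StGraphs.
Variables (V : finType) (E : rel V).

(* A directed walk from x to y: a non-empty vertex sequence x :: q following
   edges of E and ending at y.  Its length is size q. *)
Definition walk_from_to (x y : V) (p : seq V) : Prop :=
  exists q, p = x :: q /\ path E x q /\ last x q = y.

(* directed st-graph: no self-loops (E is a rel, so no parallel edges),
   s <> t, s has no incoming edges, t no outgoing edges, and every vertex
   lies on a directed walk from s to t. *)
Definition st_graph (s t : V) : Prop :=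
  [/\ irreflexive E, s != t, (forall u, ~~ E u s), (forall u, ~~ E t u)
    & forall v, exists p, walk_from_to s t p /\ v \in p].

(* Charges: values in N ∪ {∞}, with None = ∞. *)
Definition charge := V -> option nat.
Definition le_ext (k : nat) (e : option nat) : bool :=
  if e is Some n then k <= n else true.
Definition sub_ext (e : option nat) (k : nat) : option nat :=
  if e is Some n then Some (n - k) else None.
Definition valid_charge (s t : V) (eta : charge) : Prop :=
  eta s = None /\ eta t = None.

(* A flow (finitely supported map from s-t walks to N) is represented as the
   finite multiset (list) of s-t walks, each walk listed phi(p) times. *)
Definition flow := seq (seq V).
Definition consumption (phi : flow) (v : V) : nat :=
  \sum_(p <- phi) count_mem v p.
Definition flow_value (phi : flow) : nat := size phi.
Definition is_flow (s t : V) (eta : charge) (phi : flow) : Prop :=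
  (forall p, p \in phi -> walk_from_to s t p) /\
  (forall v, le_ext (consumption phi v) (eta v)).

Definition residual (eta : charge) (phi : flow) : charge :=
  fun v => sub_ext (eta v) (consumption phi v).

Definition inhibits (s t : V) (eta : charge) (phi : flow) : Prop :=
  is_flow s t eta phi /\
  ~ (exists psi, is_flow s t (residual eta phi) psi /\ 0 < flow_value psi).

Definition is_max_value (s t : V) (eta : charge) (k : nat) : Prop :=
  (exists phi, is_flow s t eta phi /\ flow_value phi = k) /\
  (forall phi, is_flow s t eta phi -> flow_value phi <= k).

Definition is_min_value (s t : V) (eta : charge) (k : nat) : Prop :=
  (exists phi, inhibits s t eta phi /\ flow_value phi = k) /\
  (forall phi, inhibits s t eta phi -> k <= flow_value phi).

Definition weak (s t : V) : Prop :=
  exists eta : charge, valid_charge s t eta /\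
    exists kmin kmax, is_min_value s t eta kmin /\ is_max_value s t eta kmax /\
      kmin <> kmax.

Definition separator (s t : V) (T : {set V}) : Prop :=
  forall p, walk_from_to s t p -> exists2 v, v \in p & v \in T.
Definition mvs (s t : V) (T : {set V}) : Prop :=
  separator s t T /\ forall T' : {set V}, T' \proper T -> ~ separator s t T'.

Definition vsqle (t u : V) (A : {set V}) : Prop :=
  forall p, walk_from_to u t p -> exists2 v, v \in p & v \in A.
Definition sqle (t : V) (A A' : {set V}) : Prop :=
  forall u, u \in A -> vsqle t u A'.
Definition sqlt (t : V) (A A' : {set V}) : Prop := sqle t A A' /\ A <> A'.

Definition complete_chain (s t : V) (n : nat) (T : nat -> {set V}) : Prop :=
  [/\ (forall i, i <= n -> mvs s t (T i)),
      T 0 = [set s], T n = [set t],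
      (forall i, i < n -> sqlt t (T i) (T i.+1))
    & (forall (X : {set V}) i, mvs s t X -> i < n ->
         sqle t (T i) X -> sqle t X (T i.+1) -> X = T i \/ X = T i.+1)].

Definition critical (s t : V) (b : V) : Prop :=
  exists (T : {set V}) (a : V), [/\ mvs s t T, a \in T, b \in T &
    exists p, walk_from_to a b p /\ 1 < size p].

End StGraphs.

(* Main.v *)
Require Import Defs.
From mathcomp Require Import all_boot finset.
From Stdlib Require Import Classical ClassicalEpsilon.
Set Implicit Arguments. Unset Strict Implicit. Unset Printing Implicit Defensive.

Definition pb (P : Prop) : bool :=
  if excluded_middle_informative P then true else false.
Lemma pbP (P : Prop) : reflect P (pb P).
Proof. rewrite /pb; case: excluded_middle_informative => h; constructor => //. Qed.

Section W.
Variables (V : finType) (E : rel V).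

Lemma wsplit x y p l1 c l2 : walk_from_to E x y p -> p = l1 ++ c :: l2 ->
  walk_from_to E x c (rcons l1 c) /\ walk_from_to E c y (c :: l2).
Proof.
case=> q [-> [pq lq]]; case: l1 => [|z l1] /=.
  by case=> ? ?; subst; split; [exists [::] | eexists]...
case=> ? ?; subst; move: pq; rewrite cat_path /= => /and3P[p1 e1 p2].
split; first by exists (rcons l1 c); rewrite rcons_path p1 e1 last_rcons.
by exists l2; split=> //; split=> //; rewrite last_cat.
Qed.

Lemma wcat x y z p q : walk_from_to E x y p -> walk_from_to E y z (y :: q) ->
  walk_from_to E x z (p ++ q).
Proof.
case=> p' [-> [pp lp]] [q' [[?] [pq lq]]]; subst.
exists (p' ++ q'); split=> //; split; first by rewrite cat_path pp.
by rewrite last_cat.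
Qed.

Lemma wedge x u v p : walk_from_to E x u p -> E u v -> walk_from_to E x v (rcons p v).
Proof.
case=> p' [-> [pp lp]] e; subst; exists (rcons p' v); split=> //.
by rewrite rcons_path pp e last_rcons.
Qed.

Lemma first_split (T : eqType) (c : T) p : c \in p ->
  exists l1 l2, p = l1 ++ c :: l2 /\ c \notin l1.
Proof.
elim: p => // x p IH; rewrite in_cons; case: (eqVneq c x) => [->|ne] /= h.
  by exists [::], p.
have [l1 [l2 [-> nl]]] := IH h; exists (x :: l1), l2; split=> //.
by rewrite in_cons negb_or ne.
Qed.

Lemma last_split (T : eqType) (c : T) p : c \in p ->
  exists l1 l2, p = l1 ++ c :: l2 /\ c \notin l2.
Proof.
elim: p => // x p IH; rewrite in_cons => h.
case: (boolP (c \in p)) => hp.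
  by have [l1 [l2 [-> nl]]] := IH hp; exists (x :: l1), l2.
by move: h; rewrite (negbTE hp) orbF => /eqP ?; subst; exists [::], p.
Qed.

End W.


Section M.
Variables (V : finType) (E : rel V) (s t : V).

Lemma sep_mvs S : separator E s t S -> exists2 Y : {set V}, Y \subset S & mvs E s t Y.
Proof.
move: {2}#|S| (leqnn #|S|) => k; elim: k S => [|k IH] S hk hS.
  case: (classic (mvs E s t S)) => hm; first by exists S.
  exfalso; apply: hm; split=> // T' hT' _.
  by move: (proper_card hT'); rewrite ltnNge (leq_trans hk (leq0n _)).
case: (classic (mvs E s t S)) => hm; first by exists S.
have [T' hT' sT'] : exists2 T' : {set V}, T' \proper S & separator E s t T'.
  apply: NNPP => hn; apply: hm; split=> // T' hT' sT'; apply: hn; by exists T'.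
have [Y hY mY] := IH T' (leq_trans (proper_card hT') hk) sT'.
exists Y => //; exact: subset_trans hY (proper_sub hT').
Qed.

Lemma mvs_walk B c : mvs E s t B -> c \in B -> exists p, walk_from_to E s t p /\
  c \in p /\ forall v, v \in p -> v \in B -> v = c.
Proof.
case=> sB mB cB.
have: ~ separator E s t (B :\ c) by apply: mB; rewrite properD1.
rewrite /separator => hs; have [p hp] := not_all_ex_not _ _ hs; have [wp hn] := imply_to_and _ _ hp.
have hv : forall v, v \in p -> v \in B -> v = c.
  move=> v vp vB; case: (eqVneq v c) => // ne; exfalso; apply: hn; exists v => //.
  by rewrite in_setD1 ne.
exists p; split=> //; split=> //.
by have [v vp vB] := sB p wp; rewrite -(hv v vp vB).
Qed.

Lemma mvs_pre B c : mvs E s t B -> c \in B -> exists l,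
  walk_from_to E s c (rcons l c) /\ ~~ has (mem B) l.
Proof.
move=> mB cB; have [p [wp [cp hv]]] := mvs_walk mB cB.
have [l1 [l2 [ep nl]]] := first_split cp.
have [w1 _] := wsplit wp ep.
exists l1; split=> //; apply/hasPn => v vl; apply/negP => vB.
have := hv v; rewrite ep mem_cat vl => /(_ isT vB) ec.
by move: nl; rewrite -ec vl.
Qed.

Lemma mvs_suf B c : mvs E s t B -> c \in B -> exists r,
  walk_from_to E c t (c :: r) /\ ~~ has (mem B) r.
Proof.
move=> mB cB; have [p [wp [cp hv]]] := mvs_walk mB cB.
have [l1 [l2 [ep nl]]] := last_split cp.
have [_ w2] := wsplit wp ep.
exists l2; split=> //; apply/hasPn => v vl; apply/negP => vB.
have := hv v; rewrite ep mem_cat in_cons vl !orbT => /(_ isT vB) ec.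
by move: nl; rewrite -ec vl.
Qed.

Lemma avP (A : {set V}) l v : ~~ has (mem A) l -> v \in l -> v \notin A.
Proof. by move/hasPn => h /h. Qed.

Lemma avI (A : {set V}) l : (forall v, v \in l -> v \notin A) -> ~~ has (mem A) l.
Proof. by move=> h; apply/hasPn => v /h. Qed.

Lemma avoidW A B u w : separator E s t A -> sqle E t A B -> mvs E s t B ->
  walk_from_to E s u w -> ~~ has (mem A) w -> ~~ has (mem B) w.
Proof.
move=> sA AB mB ww hA; apply: avI => c cw; apply/negP => cB.
have [r [wr hr]] := mvs_suf mB cB.
have [w1 [w2 [ew _]]] := first_split cw.
have [ww1 _] := wsplit ww ew.
have wst := wcat ww1 wr.
have [v vp vA] := sA _ wst.
move: vp; rewrite mem_cat => /orP[|vr].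
  rewrite mem_rcons in_cons => /orP[/eqP ec|vw1].
    by move: (avP hA cw); rewrite -ec vA.
  by move: (avP (v := v) hA); rewrite ew mem_cat vw1 vA => /(_ isT).
have [r1 [r2 [er _]]] := first_split vr.
rewrite er in wr; have [_ wv] := wsplit (l1 := c :: r1) (c := v) (l2 := r2) wr erefl.
have [x xp xB] := AB v vA _ wv.
by move: (avP (v := x) hr); rewrite er mem_cat xp orbT xB => /(_ isT).
Qed.

Lemma extract (A : {set V}) x q : path E x q -> 1 < count (mem A) (x :: q) ->
  exists a b, [/\ a \in A, b \in A & exists r, walk_from_to E a b r /\ 1 < size r].
Proof.
elim: q x => [|y q IH] x /=; first by case: (x \in A).
move=> /andP[exy pq]; case: (boolP (x \in A)) => xA /=.
  rewrite add1n ltnS => cq.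
  have : has (mem A) (y :: q) by rewrite has_count.
  move=> /hasP [b bq bA].
  have [l1 [l2 [eq _]]] := first_split bq.
  have wq : walk_from_to E x (last x (y :: q)) (x :: y :: q) by exists (y :: q); rewrite /= exy pq.
  rewrite eq in wq; have [w1 _] := wsplit (l1 := x :: l1) (c := b) (l2 := l2) wq erefl.
  exists x, b; split=> //; exists (rcons (x :: l1) b); split=> //.
  by rewrite size_rcons.
rewrite add0n => cq; exact: IH pq cq.
Qed.
End M.


Section F.
Variables (V : finType) (E : rel V) (s t : V).

Lemma sum_cnt (X : {set V}) p : \sum_(v in X) count_mem v p = count (mem X) p.
Proof.
elim: p => [|x p IH] /=; first by rewrite big1.
rewrite big_split /= IH; congr (_ + _).
case: (boolP (x \in X)) => xX.
  rewrite (bigD1 x) //= eqxx big1 // => v /andP[_ ne]; by rewrite eq_sym (negbTE ne).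
by rewrite big1 // => v vX; apply/eqP; rewrite eqb0; apply/eqP => e; move: xX; rewrite e vX.
Qed.

Lemma cons_sum (X : {set V}) (phi : flow V) :
  \sum_(v in X) consumption phi v = \sum_(p <- phi) count (mem X) p.
Proof.
rewrite /consumption exchange_big /=; apply: eq_bigr => p _; exact: sum_cnt.
Qed.

Lemma flow_twice : weak E s t -> exists X : {set V}, mvs E s t X /\
  exists p, walk_from_to E s t p /\ 1 < count (mem X) p.
Proof.
case=> eta [_ [kmin [kmax [[[phi [inh vphi]] minp] [[[psi [fpsi vpsi]] maxp] ne]]]]].
set Z := [set v | residual eta phi v == Some 0].
have sZ : separator E s t Z.
  move=> p wp; apply: NNPP => hn; case: inh => _; apply.
  case: wp => q [ep [pq lq]].
  case: (shortenP pq) lq => p' pp' up' sub' lq.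
  exists [:: s :: p']; split; last by [].
  split.
    move=> w; rewrite inE => /eqP ->; by exists p'.
  move=> v; rewrite /consumption big_cons big_nil addn0.
  case: (boolP (v \in s :: p')) => vin; last first.
    rewrite (count_memPn vin); by case: (residual eta phi v).
  rewrite (count_uniq_mem _ up') vin.
  have vp : v \in p by rewrite ep; move: vin; rewrite !in_cons => /orP[->|/sub' ->]; rewrite ?orbT.
  have vZ : v \notin Z by apply/negP => vZ; apply: hn; exists v.
  move: vZ; rewrite inE; case: (residual eta phi v) => // [[|k]] //.
have [X XZ mX] := sep_mvs sZ.
exists X; split=> //.
apply: NNPP => hn.
have H1 : forall p, walk_from_to E s t p -> count (mem X) p <= 1.
  move=> p wp; rewrite leqNgt; apply/negP => h; apply: hn; by exists p.
have fphi := inh.1.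
have le1 : kmin <= kmax by rewrite -vphi; exact: maxp.
have le2 : kmax <= kmin.
  rewrite -vphi -vpsi /flow_value -!sum1_size.
  apply: (@leq_trans (\sum_(p <- psi) count (mem X) p)).
    rewrite big_seq_cond [X in _ <= X]big_seq_cond; apply: leq_sum => p /andP[pin _].
    have [v vp vX] := mX.1 p (fpsi.1 p pin).
    by rewrite -has_count; apply/hasP; exists v.
  apply: (@leq_trans (\sum_(p <- phi) count (mem X) p)); last first.
    rewrite big_seq_cond [X in _ <= X]big_seq_cond; apply: leq_sum => p /andP[pin _].
    exact: H1 (fphi.1 p pin).
  rewrite -!cons_sum; apply: leq_sum => v vX.
  have := subsetP XZ v vX; rewrite inE /residual.
  have := fpsi.2 v; have := fphi.2 v.
  case: (eta v) => //= k h1 h2 /eqP [] /eqP; rewrite subn_eq0 => h3.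
  exact: leq_trans h2 h3.
by apply: ne; apply/eqP; rewrite eqn_leq le1 le2.
Qed.
End F.


Section L.
Variables (V : finType) (E : rel V) (s t : V).

Lemma prefD (A : {set V}) y p l r v : walk_from_to E s y p -> p = l ++ r -> v \in l ->
  ~~ has (mem A) l -> exists w, walk_from_to E s v w /\ ~~ has (mem A) w.
Proof.
move=> wp ep vl hl; have [l1 [l2 [el _]]] := first_split vl.
rewrite el -catA /= in ep; rewrite ep in wp.
have [w1 _] := wsplit (l1 := l1) (c := v) (l2 := l2 ++ r) wp erefl.
exists (rcons l1 v); split=> //; apply: avI => x; rewrite mem_rcons in_cons.
by move=> /orP[/eqP ->|xl]; apply: (avP hl); rewrite // el mem_cat ?xl // in_cons eqxx orbT.
Qed.

Lemma exitL (K : V -> Prop) x q : path E x q -> K x -> ~ K (last x q) ->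
  exists2 v, v \in q & (~ K v /\ exists u, K u /\ E u v).
Proof.
elim: q x => [|y q IH] x /=; first by move=> _ h h'.
move=> /andP[exy pq] Kx nK; case: (classic (K y)) => Ky.
  by have [v vq hv] := IH y pq Ky nK; exists v; rewrite ?in_cons ?vq ?orbT.
by exists y; [rewrite in_cons eqxx | split=> //; exists x].
Qed.

Lemma step (P : nat -> bool) n : P 0 -> ~~ P n -> exists m, [/\ m < n, P m & ~~ P m.+1].
Proof.
elim: n => [|n IH] h0 hn; first by rewrite h0 in hn.
case: (boolP (P n)) => pn; first by exists n.
by have [m [mn pm pm1]] := IH h0 pn; exists m; split=> //; apply: ltnW.
Qed.

Lemma sep_av (A : {set V}) p : separator E s t A -> walk_from_to E s t p ->
  ~~ has (mem A) p -> False.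
Proof. by move=> sA wp hp; have [v vp vA] := sA p wp; move: (avP hp vp); rewrite vA. Qed.

Lemma noin_s x y l v : st_graph E s t -> walk_from_to E x y (rcons l v) -> l != [::] -> v = s -> False.
Proof.
case: l => [|z l] // [_ _ hs _ _] [q [[? ?] [pq _]]] _ ev; subst.
by move: pq; rewrite rcons_path => /andP[_]; rewrite (negbTE (hs _)).
Qed.

Lemma hr (l : seq V) b x q : rcons l b = x :: q -> b != x -> x \in l.
Proof. by case: l => [[->]|z l [->]] /=; rewrite ?eqxx ?in_cons ?eqxx. Qed.

Lemma chain_in n (T : nat -> {set V}) (X : {set V}) b :
  st_graph E s t -> complete_chain E s t n T ->
  (forall i, i <= n -> forall p, walk_from_to E s t p -> count (mem (T i)) p <= 1) ->
  mvs E s t X -> b \in X -> exists i, i <= n /\ b \in T i.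
Proof.
move=> hst [mT T0 Tn lt cmp] H mX bX.
apply: NNPP => hn.
have nb : forall i, i <= n -> b \notin T i.
  by move=> i hi; apply/negP => bi; apply: hn; exists i.
have [p [wp [bp hv]]] := mvs_walk mX bX.
have [l1 [l2 [e1 nb1]]] := first_split bp.
have [p1 [l4 [e4 nb4]]] := last_split bp.
have [w1 _] := wsplit wp e1.
have [_ w2] := wsplit wp e4.
have wQ := wcat w1 w2; rewrite cat_rcons in wQ.
have avX1 : ~~ has (mem X) l1.
  apply: avI => v vl; apply/negP => vX; have := hv v; rewrite e1 mem_cat vl => /(_ isT vX) ev.
  by move: nb1; rewrite -ev vl.
have avX4 : ~~ has (mem X) l4.
  apply: avI => v vl; apply/negP => vX; have := hv v; rewrite e4 mem_cat in_cons vl !orbT => /(_ isT vX) ev.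
  by move: nb4; rewrite -ev vl.
have cntQ : forall i, i <= n -> count (mem (T i)) l1 + count (mem (T i)) l4 <= 1.
  move=> i hi; have := H i hi _ wQ; rewrite count_cat /=.
  by rewrite (negbTE (nb i hi)) add0n.
have bs : b != s by apply/negP => /eqP bs; move: (nb 0 (leq0n _)); rewrite T0 in_set1 bs eqxx.
have bt : b != t by apply/negP => /eqP bt; move: (nb n (leqnn _)); rewrite Tn in_set1 bt eqxx.
have sl1 : s \in l1 by case: w1 => q [eq _]; exact: hr eq bs.
have tl4 : t \in l4.
  case: w2 => q [[<-] [_ lq]]; have := mem_last b l4; rewrite lq in_cons => /orP[/eqP e|//].
  by move: bt; rewrite e eqxx.
have hL0 : has (mem (T 0)) l1 by apply/hasP; exists s => //; rewrite T0; exact: set11.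
have hLn : ~~ has (mem (T n)) l1.
  have := cntQ n (leqnn _); rewrite has_count -leqNgt.
  have : 0 < count (mem (T n)) l4 by rewrite -has_count; apply/hasP; exists t => //; rewrite Tn; exact: set11.
  case: (count _ l4) => // k _; by rewrite addnS ltnS leqn0 addn_eq0 => /andP[/eqP -> _].
have [m [mn hLm hLm1]] := @step (fun i => has (mem (T i)) l1) n hL0 hLn.
have mle : m <= n by apply: ltnW.
have hRm : ~~ has (mem (T m)) l4.
  have := cntQ m mle; move: hLm; rewrite !has_count -leqNgt.
  case: (count _ l1) => // k _; by rewrite addSn ltnS leqn0 addn_eq0 => /andP[_ /eqP ->].
have sTm := (mT m mle).1.
have sTm1 := (mT m.+1 mn).1.
pose D := fun (A : {set V}) v => exists w, walk_from_to E s v w /\ ~~ has (mem A) w.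
pose K := fun v => D (T m) v \/ D (X :|: T m.+1) v.
pose Y := [set v | pb (~ K v /\ (v = s \/ exists u, K u /\ E u v))].
have inY : forall v, v \in Y <-> (~ K v /\ (v = s \/ exists u, K u /\ E u v)).
  by move=> v; rewrite inE; split; [move/pbP | move=> h; apply/pbP].
have nKt : ~ K t.
  case=> [[w [ww hw]]|[w [ww hw]]]; first exact: sep_av sTm ww hw.
  apply: (sep_av mX.1 ww); apply: avI => v vw; apply/negP => vX.
  by move: (avP hw vw); rewrite in_setU vX.
have sY : separator E s t Y.
  move=> q wq; case: (classic (K s)) => Ks.
    case: wq => q' [eq [pq lq]]; have := exitL pq Ks; rewrite lq => /(_ nKt) [v vq hv0].
    exists v; first by rewrite eq in_cons vq orbT.
    by apply/inY; split; [exact: hv0.1 | right; exact: hv0.2].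
  exists s; first by case: wq => q' [-> _]; rewrite in_cons eqxx.
  by apply/inY; split=> //; left.
have [Y0 Y0Y mY0] := sep_mvs sY.
have bY0 : b \in Y0.
  have [v vQ vY0] := mY0.1 _ wQ.
  have := subsetP Y0Y v vY0; move/inY => [nK hin].
  move: vQ; rewrite mem_cat in_cons => /orP[vl|/orP[/eqP ev|vl]]; [exfalso| by rewrite -ev | exfalso].
    apply: nK; right; apply: (prefD wQ erefl vl); apply: avI => x xl.
    by rewrite in_setU negb_or (avP avX1 xl) (avP hLm1 xl).
  have [r1 [r2 [er _]]] := first_split vl.
  have eQ : l1 ++ b :: l4 = (l1 ++ b :: r1) ++ v :: r2 by rewrite er -catA.
  have [wv1 wv2] := wsplit wQ eQ.
  have r2l4 : forall x, x \in r2 -> x \in l4 by move=> x xr; rewrite er mem_cat in_cons xr !orbT.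
  case: hin => [vs|[u [[[w [ww hw]]|[w [ww hw]]] Euv]]].
  - by apply: (noin_s hst wv1 _ vs); case: l1 {avX1 hLm1 e1 nb1 w1 sl1 hL0 hLn wQ eQ hLm cntQ} wv1.
  - apply: (sep_av sTm (wcat (wedge ww Euv) wv2)); apply: avI => x.
    rewrite mem_cat mem_rcons in_cons => /orP[/orP[/eqP ->|xw]|xr].
    + exact: avP hRm vl.
    + exact: avP hw xw.
    + exact: avP hRm (r2l4 x xr).
  - apply: (sep_av mX.1 (wcat (wedge ww Euv) wv2)); apply: avI => x.
    rewrite mem_cat mem_rcons in_cons => /orP[/orP[/eqP ->|xw]|xr].
    + exact: avP avX4 vl.
    + by move: (avP hw xw); rewrite in_setU negb_or => /andP[].
    + exact: avP avX4 (r2l4 x xr).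
have C5 : sqle E t Y0 (T m.+1).
  move=> y yY0 R wR; move/inY: (subsetP Y0Y y yY0) => [nK [ys|[u [Ku Euy]]]].
    by subst; exact: sTm1 R wR.
  have [w [ww hw]] : exists w, walk_from_to E s u w /\ ~~ has (mem (T m.+1)) w.
    case: Ku => [[w [ww hw]]|[w [ww hw]]]; exists w; split=> //.
      exact: avoidW sTm (lt m mn).1 (mT m.+1 mn) ww hw.
    apply: avI => x xw; move: (avP hw xw); by rewrite in_setU negb_or => /andP[].
  case: wR => r [eR [pr lr]].
  have wr : walk_from_to E y t (y :: r) by exists r.
  have [v vp vT] := sTm1 _ (wcat (wedge ww Euy) wr).
  move: vp; rewrite cat_rcons mem_cat => /orP[vw|vr]; last by exists v; rewrite // eR.
  by move: (avP hw vw); rewrite vT.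
have C6 : sqle E t (T m) Y0.
  move=> a aT R wR; have [l [wl hl]] := mvs_pre (mT m mle) aT.
  case: wR => r [eR [pr lr]].
  have wr : walk_from_to E a t (a :: r) by exists r.
  have wst := wcat wl wr; rewrite cat_rcons in wst.
  have [v vp vY0] := mY0.1 _ wst.
  move: vp; rewrite mem_cat => /orP[vl|vr]; last by exists v; rewrite // eR.
  have := subsetP Y0Y v vY0; move/inY => [nK _]; exfalso; apply: nK; left.
  exact: prefD wst erefl vl hl.
have [e|e] := cmp Y0 m mY0 mn C6 C5.
  by move: (nb m mle); rewrite -e bY0.
by move: (nb m.+1 mn); rewrite -e bY0.
Qed.
End L.


Theorem theorem2 (V : finType) (E : rel V) (s t : V) :
  st_graph E s t -> weak E s t ->
  forall (n : nat) (T : nat -> {set V}), complete_chain E s t n T ->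
  exists i, i <= n /\ exists2 b, b \in T i & critical E s t b.
Proof.
move=> hst hw n T hch.
have mT : forall i, i <= n -> mvs E s t (T i) by case: hch.
case: (classic (exists i, i <= n /\ exists p, walk_from_to E s t p /\ 1 < count (mem (T i)) p)).
  case=> i [hi [p [wp cp]]].
  case: wp => q [ep [pq _]]; rewrite ep in cp.
  have [a [b [aT bT hr]]] := extract pq cp.
  exists i; split=> //; exists b => //; exists (T i), a; split=> //; exact: mT.
move=> hn.
have H : forall i, i <= n -> forall p, walk_from_to E s t p -> count (mem (T i)) p <= 1.
  move=> i hi p wp; rewrite leqNgt; apply/negP => h; apply: hn; exists i; split=> //; by exists p.
have [X [mX [p [wp cp]]]] := flow_twice hw.
case: wp => q [ep [pq _]]; rewrite ep in cp.
have [a [b [aX bX hr]]] := extract pq cp.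
have [i [hi bi]] := chain_in hst hch H mX bX.
by exists i; split=> //; exists b => //; exists X, a; split.
Qed.
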